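(* For all integers $v\geq 1$ and $L\geq 0$, \[ \frac{1-q^3}{1-q}\sum_{n_1,\ldots,n_v\geq 0} \frac{q^{\sum_{i=1}^v (N_i+2)N_i+n_v}}{(q)_{n_1}\cdots(q)_{n_{v-1}}(q)_{2n_v+2}}\,\frac{(-1;q^3)_{n_v}}{(-1;q)_{n_v}}\,(1-q^{1+n_v})\,\frac{(q)_{2L}}{(q)_{L-1-N_1}} =\sum_{j=-\infty}^{\infty}\left(\frac{j}{3}\right) q^{\frac{(2v+1)j^2-3j}{2}-(v-1)} {2L \brack L+j}_q, \] where $N_i=n_i+n_{i+1}+\cdots+n_v$ for $i=1,\ldots,v$ (for $v=1$ the product $(q)_{n_1}\cdots(q)_{n_{v-1}}$ is empty).
   Context: For a variable $a$ and integer $n\ge 0$, $(a;q)_n=(1-a)(1-aq)\cdots(1-aq^{n-1})$, and $(q)_n=(q;q)_n$; by convention $1/(q)_n=0$ for negative integers $n$. The $q$-binomial coefficient is ${A \brack B}_q=\frac{(q;q)_A}{(q;q)_B(q;q)_{A-B}}$ if $0\le B\le A$ are integers, and $0$ otherwise. $\left(\frac{j}{3}\right)$ is the Legendre symbol modulo 3: it equals $1$ if $j\equiv 1 \pmod 3$, $-1$ if $j\equiv -1\pmod 3$, and $0$ if $3\mid j$. *)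

(* Defs.v *)
From HB Require Import structures.
From mathcomp Require Import all_boot all_order all_algebra.
Set Implicit Arguments. Unset Strict Implicit. Unset Printing Implicit Defensive.
Import Order.TTheory GRing.Theory Num.Theory.
Local Open Scope ring_scope.

Section QDefs.
Variable R : numFieldType.
Implicit Types (q a : R).

Definition qpoch a q (n : nat) : R := \prod_(i < n) (1 - a * q ^+ i).

Definition qfac q (n : nat) : R := qpoch q q n.

(* 1/(q)_n for an integer n, with the convention 1/(q)_n = 0 for n < 0 *)
Definition qfac_inv q (n : int) : R :=
  match n with Posz m => (qfac q m)^-1 | Negz _ => 0 end.

Definition qbinom q (A B : int) : R :=
  if (0 <= B) && (B <= A) then
    qfac q `|A|%N / (qfac q `|B|%N * qfac q `|A - B|%N)
  else 0.

Definition leg3 (j : int) : R :=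
  if (j %% 3)%Z == 1 then 1 else if (j %% 3)%Z == 2 then -1 else 0.

(* n_1..n_v given as a sequence s with n_{i+1} = nth 0 s i;
   N_{i+1} = n_{i+1} + ... + n_v *)
Definition bigN (v : nat) (s : seq nat) (i : nat) : nat :=
  (\sum_(i <= k < v) nth 0 s k)%N.

Definition lhs_term q (v L : nat) (s : seq nat) : R :=
  let nv := nth 0%N s v.-1 in
  let e := (\sum_(i < v) (bigN v s i + 2) * bigN v s i + nv)%N in
  q ^+ e
  / ((\prod_(i < v.-1) qfac q (nth 0%N s i)) * qfac q (2 * nv + 2))
  * (qpoch (-1) (q ^+ 3) nv / qpoch (-1) q nv)
  * (1 - q ^+ (1 + nv))
  * qfac q (2 * L)
  * qfac_inv q (L%:Z - 1 - (bigN v s 0)%:Z).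

Definition rhs_term q (v L : nat) (j : int) : R :=
  leg3 j * q ^ ((((2 * v + 1)%:Z * j ^+ 2 - 3 * j) %/ 2)%Z - (v%:Z - 1))
  * qbinom q (2 * L)%:Z (L%:Z + j).

End QDefs.

(* Main.v *)
Require Import Defs.
From HB Require Import structures.
From mathcomp Require Import all_boot all_order all_algebra.
From mathcomp Require Import zify ring lra.
Import Order.TTheory GRing.Theory Num.Theory.
Set Implicit Arguments. Unset Strict Implicit. Unset Printing Implicit Defensive.
Local Open Scope ring_scope.

Section Main.
Variable R : numFieldType.
Variable q : R.
Hypothesis hq0 : q != 0.
Hypothesis hq : forall k : nat, (0 < k)%N -> q ^+ k != 1.

Local Notation iq := (qfac_inv q).
Arguments qfac_inv : simpl never.
Arguments qfac : simpl never.

Lemma q1n0 k : (0 < k)%N -> 1 - q ^+ k != 0.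
Proof. by move=> k0; rewrite subr_eq0 eq_sym hq. Qed.

Lemma q1p0 k : 1 + q ^+ k != 0.
Proof.
case: k => [|k]; first by rewrite expr0; change (2%:R != 0 :> R); rewrite pnatr_eq0.
apply/eqP => h.
have : q ^+ (2 * k.+1) == 1.
  by rewrite mulnC exprM; move/eqP: h; rewrite addrC addr_eq0 => /eqP ->; rewrite sqrrN expr1n.
by rewrite (negbTE (hq _)).
Qed.

Lemma qfacS n : qfac q n.+1 = qfac q n * (1 - q ^+ n.+1).
Proof. by rewrite /qfac /qpoch big_ord_recr /= exprS. Qed.

Lemma qfac_neq0 n : qfac q n != 0.
Proof. elim: n => [|n IH]; first by rewrite /qfac /qpoch big_ord0 oner_eq0.
by rewrite qfacS mulf_neq0 // q1n0. Qed.

Lemma iq_neg (n : int) : n < 0 -> iq n = 0.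
Proof. by case: n. Qed.

Lemma iq_nat (n : nat) : iq n = (qfac q n)^-1.
Proof. by []. Qed.

Lemma iq_step (n : int) : iq (n - 1) = (1 - q ^ n) * iq n.
Proof.
case: n => [[|m]|m].
- by rewrite iq_neg // expr0z subrr mul0r.
- have -> : (Posz m.+1 - 1) = Posz m by lia.
  rewrite !iq_nat qfacS.
  have h := q1n0 (ltn0Sn m).
  have h2 := qfac_neq0 m.
  rewrite -[q ^ m.+1%:Z]/(q ^+ m.+1). field. by rewrite h h2.
- by rewrite !iq_neg // ?mulr0 //; lia.
Qed.

Lemma iq_stepn (n : nat) : iq n = (1 - q ^+ n.+1) * iq n.+1.
Proof. have := iq_step n.+1; have -> : (n.+1%:Z - 1) = n by lia. by []. Qed.

Lemma iq0 : iq 0 = 1.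
Proof. by rewrite iq_nat /qfac /qpoch big_ord0 invr1. Qed.

Lemma qzD (a b : int) : q ^ (a + b) = q ^ a * q ^ b.
Proof. exact: expfzDr. Qed.
Lemma qzN (a : int) : q ^ (- a) = (q ^ a)^-1.
Proof. by rewrite invr_expz. Qed.
Lemma qz_neq0 (a : int) : q ^ a != 0.
Proof. exact: expfz_neq0. Qed.

Definition Phi (m c : nat) : R :=
  \sum_(k < m.+1) q ^+ (k * k + c * k) * iq k * iq (m%:Z - k%:Z) * iq (c + k)%N.

Lemma key m c : Phi m c = iq m * iq (c + m)%N.
Proof.
elim: m c => [|m IH] c.
  rewrite /Phi big_ord_recl big_ord0 addr0 /=.
  have q0 : qfac q 0 = 1 by rewrite /qfac /qpoch big_ord0.
  have i0 : iq 0 = 1 by rewrite iq_nat q0 invr1.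
  by rewrite !muln0 addn0 expr0 mul1r subrr i0 !mul1r.
have hm := q1n0 (ltn0Sn m).
suff : (1 - q ^+ m.+1) * Phi m.+1 c = Phi m c.+1.
  rewrite IH => h.
  have -> : Phi m.+1 c = (1 - q ^+ m.+1)^-1 * (iq m * iq (c.+1 + m)%N).
    by rewrite -h mulrA mulVf // mul1r.
  have e1 : iq m = (1 - q ^+ m.+1) * iq m.+1.
    have := iq_step m.+1; have -> : (m.+1%:Z - 1) = m by lia.
    by [].
  rewrite e1 !mulrA mulVf // mul1r; congr (_ * iq _); lia.
rewrite /Phi big_distrr /=.
have split : forall k : nat, (1 - q ^+ m.+1) * (q ^+ (k * k + c * k) * iq k * iq (m.+1%:Z - k%:Z) * iq (c + k)%N)
   = q ^+ (k * k + c * k) * iq (k%:Z - 1) * iq (m.+1%:Z - k%:Z) * iq (c + k)%N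
     + q ^+ (k * k + c.+1 * k) * iq k * iq (m%:Z - k%:Z) * iq (c + k)%N.
  move=> k.
  rewrite iq_step.
  have -> : iq (m%:Z - k%:Z) = (1 - q ^ (m.+1%:Z - k%:Z)) * iq (m.+1%:Z - k%:Z).
    by rewrite -iq_step; congr iq; lia.
  have e2 : q ^+ (k * k + c.+1 * k) = q ^+ (k * k + c * k) * q ^+ k.
    by rewrite -exprD; congr (_ ^+ _); lia.
  have e3 : q ^+ k * q ^ (m.+1%:Z - k%:Z) = q ^+ m.+1.
    have h3 := qzD k (m.+1%:Z - k%:Z).
    have e : (k%:Z + (m.+1%:Z - k%:Z)) = m.+1 by lia.
    by rewrite e in h3; exact: (esym h3).
  rewrite e2.
  set A := q ^+ (k * k + c * k); set B := iq k; set C := iq (m.+1%:Z - k%:Z).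
  set D := iq (c+k)%N.
  rewrite -[q ^ (k : int)]/(q ^+ k).
  have -> : A * ((1 - q ^+ k) * B) * C * D + A * q ^+ k * B * ((1 - q ^ (m.+1%:Z - k%:Z)) * C) * D
     = A * B * C * D * (1 - q ^+ k * q ^ (m.+1%:Z - k%:Z)) by ring.
  by rewrite e3; ring.
rewrite (eq_bigr _ (fun (k : 'I_m.+2) _ => split k)) big_split /=.
rewrite big_ord_recl /= iq_neg // mulr0 !mul0r add0r.
rewrite [X in _ + X = _]big_ord_recr /=.
rewrite [iq (m%:Z - m.+1%:Z)]iq_neg; last by lia.
rewrite mulr0 mul0r addr0.
rewrite -big_split /=; apply: eq_bigr => k _.
rewrite /bump /=.
rewrite [iq (c + k)%N]iq_stepn.
have -> : ((1 + k)%:Z - 1) = k by lia.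
have -> : (m.+1%:Z - (1 + k)%:Z) = (m%:Z - k%:Z) by lia.
have -> : (c + (1 + k))%N = (c + k).+1 by lia.
have -> : (c.+1 + k)%N = (c + k).+1 by lia.
have -> : ((1 + k) * (1 + k) + c * (1 + k))%N = ((k * k + c.+1 * k) + (c + k).+1)%N by lia.
rewrite exprD; ring.
Qed.


Lemma sum_trunc (F : nat -> R) a b : (a <= b)%N ->
  (forall x, (a <= x)%N -> (x < b)%N -> F x = 0) ->
  \sum_(x < b) F x = \sum_(x < a) F x.
Proof.
move=> ab h.
rewrite -!(big_mkord xpredT) (big_cat_nat (leq0n a) ab) /=.
rewrite [X in _ + X]big1_seq ?addr0 // => x /andP[_].
by rewrite mem_index_iota => /andP[h1 h2]; apply: h.
Qed.

Lemma bailey_step (al be : nat -> R) M :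
  (forall n, (n <= M)%N -> be n = \sum_(r < n.+1) al r * iq (n%:Z - r%:Z) * iq (n + r + 2)%N) ->
  \sum_(n < M.+1) q ^+ (n * n + 2 * n) * iq (M%:Z - n%:Z) * be n
  = \sum_(r < M.+1) q ^+ (r * r + 2 * r) * al r * iq (M%:Z - r%:Z) * iq (M + r + 2)%N.
Proof.
move=> hb.
have e1 : forall n : 'I_M.+1, be n = \sum_(r < M.+1) al r * iq (n%:Z - r%:Z) * iq (n + r + 2)%N.
  move=> n; rewrite hb; last by rewrite -ltnS.
  rewrite (@sum_trunc (fun r => al r * iq (n%:Z - r%:Z) * iq (n + r + 2)%N) n.+1 M.+1) //.
  by move=> x h1 h2; rewrite iq_neg ?mulr0 ?mul0r //; lia.
under eq_bigr => n _ do rewrite e1 big_distrr.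
rewrite exchange_big /=; apply: eq_bigr => r _.
have rM : (r <= M)%N by rewrite -ltnS.
rewrite -(big_mkord xpredT (fun n => q ^+ (n * n + 2 * n) * iq (M%:Z - n%:Z) * (al r * iq (n%:Z - r%:Z) * iq (n + r + 2)%N))).
rewrite (@big_cat_nat _ _ _ r 0 M.+1) /=; [|by []|by lia].
rewrite big1_seq ?add0r; last first.
  move=> n /andP[_]; rewrite mem_index_iota => /andP[_ h].
  by rewrite (@iq_neg (n%:Z - r%:Z)) ?(mulr0, mul0r) //; lia.
rewrite -{1}(add0n r) big_addn.
have -> : (M.+1 - r = (M - r).+1)%N by lia.
rewrite big_mkord.
have := key (M - r) (2 * r + 2).
rewrite /Phi => hk.
have -> : q ^+ (r * r + 2 * r) * al r * iq (M%:Z - r%:Z) * iq (M + r + 2)%N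
  = q ^+ (r * r + 2 * r) * al r * (iq (M - r)%N * iq (2 * r + 2 + (M - r))%N).
  rewrite mulrA; congr (_ * _ * iq _ * iq _); lia.
rewrite -hk big_distrr /=; apply: eq_bigr => k _.
have -> : (k + r)%N%:Z - r%:Z = k by lia.
have -> : (M%:Z - (k + r)%N%:Z) = ((M - r)%N%:Z - k%:Z) by lia.
have -> : (k + r + r + 2)%N = (2 * r + 2 + k)%N by lia.
have -> : ((k + r) * (k + r) + 2 * (k + r))%N = ((r * r + 2 * r) + (k * k + (2 * r + 2) * k))%N by lia.
rewrite exprD; ring.
Qed.


Definition E0 (j : int) : int := ((j * j - 3 * j) %/ 2)%Z + 1.

Lemma E0_shift j : E0 (j + 3) = E0 j + 3 * j.
Proof.
rewrite /E0.
have -> : (j + 3) * (j + 3) - 3 * (j + 3) = (3 * j) * 2 + (j * j - 3 * j) by ring.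
rewrite divzMDl //; ring.
Qed.

Lemma E0_neg j : E0 (- j) = E0 j + 3 * j.
Proof.
rewrite /E0.
have -> : (- j) * (- j) - 3 * (- j) = (3 * j) * 2 + (j * j - 3 * j) by ring.
rewrite divzMDl //; ring.
Qed.

Definition w (K : nat) (j : int) : R :=
  q ^ (E0 j) * (1 - q ^ (3 * j)) * iq (K%:Z - j) * iq (K%:Z + j).

Definition Acoef (K : nat) : R := let y := q ^+ K in
  (1 + y) * (q + y) * (1 - y) * (1 - q * y ^+ 2) * (1 - q ^+ 2 * y ^+ 2).
Definition Bcoef (K : nat) : R := let y := q ^+ K in
  (1 + y) * (q + y) * q * (1 - q * y) * (1 - y / q + y ^+ 2 / q ^+ 2).
Definition Pc (K : nat) (X : R) : R := let y := q ^+ K in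
  (- q ^+ 3 * y * (1 - q * y) * (1 + y)) / X
  + (q * (q - 1) + (-1 + q ^+ 2 - q ^+ 3) * y + q * (1 - q ^+ 2) * y ^+ 2
     + q * (1 - q + q ^+ 3) * y ^+ 3 + q ^+ 2 * (q - 1) * y ^+ 4)
  + (- y * (1 - q * y) * (1 + y)) * X.
Definition Gc (K : nat) (j : int) : R :=
  q ^ (E0 j) * Pc K (q ^ j) * iq (K%:Z + 1 - j) * iq (K%:Z + j - 2).

Lemma iq_down (n m : int) : m = n - 1 -> iq m = (1 - q ^ n) * iq n.
Proof. by move=> ->; rewrite iq_step. Qed.

Lemma qKj (K : nat) (c j e : int) : e = K%:Z + c + j -> q ^ e = q ^+ K * q ^ c * q ^ j.
Proof. by move=> ->; rewrite !qzD. Qed.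
Lemma qKmj (K : nat) (c j e : int) : e = K%:Z + c - j -> q ^ e = q ^+ K * q ^ c / q ^ j.
Proof. by move=> ->; rewrite !qzD qzN. Qed.

Lemma cert K j : Acoef K * w K.+1 j - Bcoef K * w K j = Gc K (j + 3) - Gc K j.
Proof.
rewrite /Acoef /Bcoef /w /Gc /Pc /=.
set Y := q ^+ K.
set X := q ^ j.
have X0 : X != 0 by apply: qz_neq0.
have e3 : q ^ (3 * j) = X ^+ 3.
  by rewrite (_ : 3 * j = j + j + j) ?qzD //; [rewrite /X; ring | ring].
have ej3 : q ^ (j + 3) = X * q ^+ 3 by rewrite qzD.
rewrite E0_shift qzD e3 ej3.
set a := iq (K.+1%:Z - j).
set b := iq (K.+1%:Z + j).
have qm1 : q ^ (-1) = q^-1 by rewrite qzN expr1z.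
have i1 : iq (K%:Z - j) = (1 - q * Y / X) * a.
  rewrite (@iq_down (K.+1%:Z - j)); last by lia.
  rewrite (@qKmj K 1 j); last by lia.
  by rewrite -/Y -/X -/a expr1z; congr ((1 - _) * _); ring.
have i2 : iq (K%:Z + j) = (1 - q * Y * X) * b.
  rewrite (@iq_down (K.+1%:Z + j)); last by lia.
  rewrite (@qKj K 1 j); last by lia.
  by rewrite -/Y -/X -/b expr1z; congr ((1 - _) * _); ring.
have i3 : iq (K%:Z + 1 - j) = a by rewrite /a; congr iq; lia.
have i4 : iq (K%:Z + j - 2) = (1 - Y * X / q) * (1 - Y * X) * (1 - q * Y * X) * b.
  rewrite (@iq_down (K%:Z + j - 1)); last by lia.
  rewrite (@iq_down (K%:Z + j)); last by lia.
  rewrite (@iq_down (K.+1%:Z + j)); last by lia.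
  rewrite (@qKj K (-1) j (K%:Z + j - 1)); last by lia.
  rewrite (@qKj K 0 j (K%:Z + j)); last by lia.
  rewrite (@qKj K 1 j (K.+1%:Z + j)); last by lia.
  rewrite -/Y -/X -/b qm1 expr0z expr1z; ring.
have i5 : iq (K%:Z + 1 - (j + 3)) = (1 - Y / (q * X)) * (1 - Y / X) * (1 - q * Y / X) * a.
  rewrite (@iq_down (K%:Z - 1 - j)); last by lia.
  rewrite (@iq_down (K%:Z - j)); last by lia.
  rewrite (@iq_down (K.+1%:Z - j)); last by lia.
  rewrite (@qKmj K (-1) j (K%:Z - 1 - j)); last by lia.
  rewrite (@qKmj K 0 j (K%:Z - j)); last by lia.
  rewrite (@qKmj K 1 j (K.+1%:Z - j)); last by lia.
  rewrite -/Y -/X -/a qm1 expr0z expr1z; field; rewrite hq0 X0 //.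
have i6 : iq (K%:Z + (j + 3) - 2) = b by rewrite /b; congr iq; lia.
rewrite i1 i2 i3 i4 i5 i6.
field.
by rewrite hq0 X0.
Qed.


Lemma w_hi K (j : int) : K%:Z < j -> w K j = 0.
Proof. by move=> h; rewrite /w (@iq_neg (K%:Z - j)) ?mulr0 ?mul0r //; lia. Qed.
Lemma w_lo K (j : int) : K%:Z + j < 0 -> w K j = 0.
Proof. by move=> h; rewrite /w (@iq_neg (K%:Z + j)) ?mulr0 ?mul0r //. Qed.

Lemma w_odd K (j : int) : w K (- j) = - w K j.
Proof.
rewrite /w E0_neg qzD.
have -> : 3 * - j = - (3 * j) by ring.
rewrite qzN.
have -> : K%:Z - - j = K%:Z + j by ring.
have Z0 : q ^ (3 * j) != 0 by apply: qz_neq0.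
field.
by rewrite Z0.
Qed.

Definition F (K : nat) : R :=
  \sum_(k < K.+1) (w K (3 * k + 1)%N + w K (- (3 * k + 2)%N%:Z)).

Lemma Fext K : \sum_(k < K.+2) (w K (3 * k + 1)%N + w K (- (3 * k + 2)%N%:Z)) = F K.
Proof.
rewrite big_ord_recr /= w_hi ?w_lo ?addr0 //; lia.
Qed.

Lemma tele (u : nat -> R) n : \sum_(k < n) (u k.+1 - u k) = u n - u 0%N.
Proof. by rewrite -(big_mkord xpredT (fun k => u k.+1 - u k)) telescope_sumr. Qed.

Lemma Frec K : Acoef K * F K.+1 = Bcoef K * F K.
Proof.
apply/eqP; rewrite -subr_eq0; apply/eqP.
rewrite -(Fext K) /F !mulr_sumr -sumrB.
pose u k := Gc K (3 * k + 1)%N.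
pose v k := Gc K (1 - (3 * k)%N%:Z).
have -> : \sum_(i < K.+2) (Acoef K * (w K.+1 (3 * i + 1)%N + w K.+1 (- (3 * i + 2)%N%:Z))
     - Bcoef K * (w K (3 * i + 1)%N + w K (- (3 * i + 2)%N%:Z)))
   = \sum_(i < K.+2) ((u i.+1 - u i) - (v i.+1 - v i)).
  apply: eq_bigr => i _.
  have h1 := cert K (3 * i + 1)%N.
  have h2 := cert K (- (3 * i + 2)%N%:Z).
  have -> : u i.+1 - u i = Gc K ((3 * i + 1)%N%:Z + 3) - Gc K (3 * i + 1)%N.
    by rewrite /u; congr (Gc K _ - _); lia.
  have -> : v i.+1 - v i = - (Gc K (- (3 * i + 2)%N%:Z + 3) - Gc K (- (3 * i + 2)%N%:Z)).
    rewrite /v opprB; congr (Gc K _ - Gc K _); lia.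
  rewrite -h1 -h2; ring.
rewrite sumrB !tele /u /v.
rewrite [Gc K (3 * K.+2 + 1)%N]/Gc [Gc K (1 - (3 * K.+2)%N%:Z)]/Gc.
rewrite (@iq_neg (K%:Z + 1 - (3 * K.+2 + 1)%N%:Z)); last by lia.
rewrite (@iq_neg (K%:Z + (1 - (3 * K.+2)%N%:Z) - 2)); last by lia.
have -> : (1 - (3 * 0)%N%:Z) = (3 * 0 + 1)%N by [].
by rewrite !mulr0 !mul0r subrr.
Qed.


Lemma sum3 (f : nat -> R) n :
  \sum_(r < 3 * n) f r = \sum_(k < n) (f (3 * k)%N + f (3 * k).+1 + f (3 * k).+2).
Proof.
elim: n => [|n IH]; first by rewrite muln0 !big_ord0.
have -> : (3 * n.+1 = (3 * n).+3)%N by lia.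
by rewrite 3!big_ord_recr /= IH big_ord_recr /= -!addrA.
Qed.

Lemma leg3_nat (n : nat) : @leg3 R n%:Z =
  if (n %% 3 == 1)%N then 1 else if (n %% 3 == 2)%N then -1 else 0.
Proof. by rewrite /leg3 modz_nat. Qed.

Lemma Fsum K : \sum_(r < K) @leg3 R r.+1%:Z * w K r.+1%:Z = F K.
Proof.
rewrite -(@sum_trunc (fun r => @leg3 R r.+1%:Z * w K r.+1%:Z) K (3 * K.+1)); last 2 first.
- lia.
- by move=> x h1 h2; rewrite w_hi ?mulr0 //; lia.
rewrite (sum3 (fun r => @leg3 R r.+1%:Z * w K r.+1%:Z)) /F; apply: eq_bigr => k _.
rewrite !leg3_nat.
have -> : ((3 * k).+1 %% 3 = 1)%N by lia.
have -> : ((3 * k).+2 %% 3 = 2)%N by lia.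
have -> : ((3 * k).+3 %% 3 = 0)%N by lia.
rewrite /= mul1r mul0r addr0 mulN1r -w_odd.
by rewrite addn1 addn2.
Qed.


Definition Bf (n : nat) : R := qpoch (-1) (q ^+ 3) n / qpoch (-1) q n * (1 - q ^+ (1 + n)).

Lemma qpochS (a b : R) n : qpoch a b n.+1 = qpoch a b n * (1 - a * b ^+ n).
Proof. by rewrite /qpoch big_ord_recr. Qed.

Lemma qpm1_neq0 n : qpoch (-1) q n != 0.
Proof.
rewrite /qpoch; apply/prodf_neq0 => i _.
by rewrite mulN1r opprK q1p0.
Qed.

Lemma Acoef_neq0 K : Acoef K.+1 != 0.
Proof.
rewrite /Acoef /=.
have h1 : q * (q ^+ K.+1) ^+ 2 = q ^+ (2 * K + 3).
  by rewrite -exprM -exprS; congr (_ ^+ _); lia.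
have h2 : q ^+ 2 * (q ^+ K.+1) ^+ 2 = q ^+ (2 * K + 4).
  by rewrite -exprM -exprD; congr (_ ^+ _); lia.
have h3 : q + q ^+ K.+1 = q * (1 + q ^+ K) by rewrite exprS mulrDr mulr1.
rewrite h1 h2 h3.
by rewrite !mulf_neq0 ?q1p0 ?q1n0 //; lia.
Qed.

Lemma Fclosed K : F K.+1 = (1 - q ^+ 3) / (1 - q) * q ^+ K * Bf K * iq (2 * K.+1)%N.
Proof.
have q1 : 1 - q != 0 by have := q1n0 (ltn0Sn 0); rewrite expr1.
elim: K => [|K IH].
  rewrite /F big_ord_recr big_ord_recl big_ord0 /=.
  rewrite (@w_lo 1 (- (3 * 0 + 2)%N%:Z)) //.
  rewrite (@w_hi 1 (3 * 1 + 1)%N) //.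
  rewrite (@w_lo 1 (- (3 * 1 + 2)%N%:Z)) //.
  rewrite !addr0 /w.
  have -> : E0 (3 * 0 + 1)%N = 0 by [].
  have -> : 1%:Z - (3 * 0 + 1)%N%:Z = 0 by [].
  have -> : 1%:Z + (3 * 0 + 1)%N%:Z = (2 * 1)%N by [].
  have -> : q ^ (3 * (3 * 0 + 1)%N%:Z) = q ^+ 3 by [].
  rewrite /Bf /qpoch !big_ord0 /= expr0z expr0 iq0 addn0 expr1.
  by field.
apply: (mulfI (Acoef_neq0 K)).
rewrite Frec IH.
rewrite [iq (2 * K.+1)%N]iq_stepn [iq (2 * K.+1).+1]iq_stepn.
have -> : ((2 * K.+1).+2 = 2 * K.+2)%N by lia.
rewrite /Acoef /Bcoef /Bf !qpochS /=.
set z := q ^+ K.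
have e1 : q ^+ K.+1 = q * z by rewrite exprS.
have e2 : (q ^+ 3) ^+ K = z ^+ 3 by rewrite /z -!exprM mulnC.
have e3 : q ^+ (1 + K.+1) = q ^+ 2 * z by rewrite /z -exprD; congr (_ ^+ _); lia.
have e4 : q ^+ (1 + K) = q * z by rewrite /z -exprS add1n.
have e5 : q ^+ (2 * K.+1).+1 = q ^+ 3 * z ^+ 2 by rewrite /z -exprM -exprD; congr (_ ^+ _); lia.
have e6 : q ^+ (2 * K.+2) = q ^+ 4 * z ^+ 2 by rewrite /z -exprM -exprD; congr (_ ^+ _); lia.
rewrite e1 e2 ?e3 ?e4 ?e5 ?e6.
have z1 : 1 + z != 0 by apply: q1p0.
have p1 := qpm1_neq0 K.
field.
by rewrite mulN1r opprK z1 p1 q1 hq0.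
Qed.


Definition al (v r : nat) : R :=
  (1 - q) / (1 - q ^+ 3) * @leg3 R r.+1%:Z * q ^ (E0 r.+1%:Z) * q ^+ (v * (r * r + 2 * r))
  * (1 - q ^ (3 * r.+1%:Z)).

Lemma q3n0 : 1 - q ^+ 3 != 0. Proof. exact: q1n0. Qed.
Lemma q1n0' : 1 - q != 0. Proof. by have := q1n0 (ltn0Sn 0); rewrite expr1. Qed.

Lemma base_pair n : q ^+ n * Bf n * iq (2 * n + 2)%N
  = \sum_(r < n.+1) al 0 r * iq (n%:Z - r%:Z) * iq (n + r + 2)%N.
Proof.
have -> : \sum_(r < n.+1) al 0 r * iq (n%:Z - r%:Z) * iq (n + r + 2)%N
   = (1 - q) / (1 - q ^+ 3) * \sum_(r < n.+1) @leg3 R r.+1%:Z * w n.+1 r.+1%:Z.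
  rewrite mulr_sumr; apply: eq_bigr => r _.
  rewrite /al /w mul0n expr0 mulr1.
  have -> : n.+1%:Z - r.+1%:Z = n%:Z - r%:Z by lia.
  have -> : n.+1%:Z + r.+1%:Z = (n + r + 2)%N by lia.
  ring.
rewrite Fsum Fclosed.
have -> : (2 * n.+1)%N = (2 * n + 2)%N by lia.
have h3 := q3n0; have h1 := q1n0'.
field.
by rewrite h3 h1.
Qed.

Definition Wv (v : nat) (s : seq nat) : R :=
  let nv := nth 0%N s v.-1 in
  let e := (\sum_(i < v) (bigN v s i + 2) * bigN v s i + nv)%N in
  q ^+ e
  / ((\prod_(i < v.-1) qfac q (nth 0%N s i)) * qfac q (2 * nv + 2))
  * (qpoch (-1) (q ^+ 3) nv / qpoch (-1) q nv)
  * (1 - q ^+ (1 + nv)).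

Lemma lhs_W v L s : lhs_term q v L s = Wv v s * qfac q (2 * L) * qfac_inv q (L%:Z - 1 - (bigN v s 0)%:Z).
Proof. by []. Qed.

Lemma bigN_cons v n s i : bigN v.+1 (n :: s) i.+1 = bigN v s i.
Proof.
rewrite /bigN -(addn1 i) -(addn1 v) big_addn addnK.
by apply: eq_bigr => k _; rewrite addn1.
Qed.

Lemma bigN_cons0 v n s : bigN v.+1 (n :: s) 0 = (n + bigN v s 0)%N.
Proof.
by rewrite /bigN big_nat_recl.
Qed.

Lemma W1 n : Wv 1 [:: n] = q ^+ (n * n + 2 * n) * (q ^+ n * Bf n * iq (2 * n + 2)%N).
Proof.
rewrite /Wv /= big_ord1 big_ord0 mul1r /Bf iq_nat.
have -> : bigN 1 [:: n] 0 = n by rewrite /bigN big_nat1.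
have -> : ((n + 2) * n + n = (n * n + 2 * n) + n)%N by lia.
rewrite exprD; ring.
Qed.

Lemma Wcons v n s : (0 < v)%N ->
  Wv v.+1 (n :: s) = q ^+ ((n + bigN v s 0) * (n + bigN v s 0) + 2 * (n + bigN v s 0)) * iq n * Wv v s.
Proof.
case: v => [//|v] _.
rewrite /Wv /= [\sum_(i < v.+2) _]big_ord_recl [\prod_(i < v.+1) _]big_ord_recl /= bigN_cons0 iq_nat.
under eq_bigr => i _ do rewrite /bump /= add1n bigN_cons.
set N := bigN v.+1 s 0.
set Sm := (\sum_(i < v.+1) _)%N.
set nv := nth 0%N s v.
have -> : ((n + N + 2) * (n + N) + Sm + nv =
   ((n + N) * (n + N) + 2 * (n + N)) + (Sm + nv))%N by lia.
rewrite exprD.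
have h1 := qfac_neq0 n.
have h2 := qfac_neq0 (2 * nv + 2).
have h3 := qpm1_neq0 nv.
have h4 : \prod_(i < v) qfac q (nth 0%N s i) != 0 by apply/prodf_neq0 => i _; apply: qfac_neq0.
field.
by rewrite h1 h2 h3 h4.
Qed.


Lemma sum_tuple_cons (v L : nat) (G : seq nat -> R) :
  \sum_(t : v.+1.-tuple 'I_L.+1) G [seq val x | x <- t]
  = \sum_(x : 'I_L.+1) \sum_(t : v.-tuple 'I_L.+1) G (val x :: [seq val y | y <- t]).
Proof.
rewrite pair_bigA /=.
rewrite (reindex (fun p : 'I_L.+1 * v.-tuple 'I_L.+1 => [tuple of p.1 :: p.2])) /=.
  by apply: eq_bigr.
exists (fun t : v.+1.-tuple 'I_L.+1 => (thead t, [tuple of behead t])).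
  move=> [x t] _ /=; rewrite theadE; congr (_, _); exact: val_inj.
by move=> t _ /=; rewrite [in RHS](tuple_eta t).
Qed.

Lemma sum_tuple0 (L : nat) (G : seq nat -> R) :
  \sum_(t : 0.-tuple 'I_L.+1) G [seq val x | x <- t] = G [::].
Proof.
rewrite (big_pred1 [tuple]) //.
by move=> t /=; apply/esym/eqP; exact: tuple0.
Qed.

Lemma inner_reindex L M N : (M <= L)%N ->
  \sum_(x < L.+1) q ^+ ((x + N) * (x + N) + 2 * (x + N)) * iq x * iq (M%:Z - (x + N)%N%:Z)
  = \sum_(n < M.+1) q ^+ (n * n + 2 * n) * iq (M%:Z - n%:Z) * iq (n%:Z - N%:Z).
Proof.
move=> ML.
case: (leqP N M) => NM; last first.
  rewrite big1; last by move=> x _; rewrite (@iq_neg (M%:Z - (x + N)%N%:Z)) ?mulr0 //; lia.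
  rewrite big1 // => n _; rewrite (@iq_neg (n%:Z - N%:Z)) ?mulr0 //.
  have := ltn_ord n; lia.
rewrite (@sum_trunc (fun x => q ^+ ((x + N) * (x + N) + 2 * (x + N)) * iq x * iq (M%:Z - (x + N)%N%:Z)) (M - N).+1 L.+1); last 2 first.
- lia.
- by move=> x h1 h2; rewrite (@iq_neg (M%:Z - (x + N)%N%:Z)) ?mulr0 //; lia.
rewrite -(big_mkord xpredT (fun n => q ^+ (n * n + 2 * n) * iq (M%:Z - n%:Z) * iq (n%:Z - N%:Z))).
rewrite (@big_cat_nat _ _ _ N 0 M.+1) /=; [|by []|by lia].
rewrite [\sum_(0 <= n < N) _]big1_seq ?add0r; last first.
  move=> n /andP[_]; rewrite mem_index_iota => /andP[_ h].
  by rewrite (@iq_neg (n%:Z - N%:Z)) ?mulr0 //; lia.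
have e := @big_addn R 0 +%R 0 M.+1 N xpredT (fun n => q ^+ (n * n + 2 * n) * iq (M%:Z - n%:Z) * iq (n%:Z - N%:Z)).
rewrite add0n in e; rewrite e.
have -> : (M.+1 - N = (M - N).+1)%N by lia.
rewrite big_mkord; apply: eq_bigr => x _.
have -> : (x + N)%N%:Z - N%:Z = x by lia.
ring.
Qed.

Lemma chain u L M : (M <= L)%N ->
  \sum_(t : u.+1.-tuple 'I_L.+1) Wv u.+1 [seq val x | x <- t]
      * iq (M%:Z - (bigN u.+1 [seq val x | x <- t] 0)%:Z)
  = \sum_(r < M.+1) al u.+1 r * iq (M%:Z - r%:Z) * iq (M + r + 2)%N.
Proof.
elim: u M => [|u IH] M ML.
  rewrite (sum_tuple_cons 0 L (fun s => Wv 1 s * iq (M%:Z - (bigN 1 s 0)%:Z))).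
  under eq_bigr => x _ do rewrite (sum_tuple0 L (fun s => Wv 1 (val x :: s) * iq (M%:Z - (bigN 1 (val x :: s) 0)%:Z))).
  have -> : \sum_(x < L.+1) Wv 1 [:: val x] * iq (M%:Z - (bigN 1 [:: val x] 0)%:Z)
     = \sum_(x < L.+1) q ^+ (x * x + 2 * x) * iq (M%:Z - x%:Z) * (q ^+ x * Bf x * iq (2 * x + 2)%N).
    apply: eq_bigr => x _; rewrite W1.
    have -> : bigN 1 [:: val x] 0 = x by rewrite /bigN big_nat1.
    ring.
  rewrite (@sum_trunc (fun x => q ^+ (x * x + 2 * x) * iq (M%:Z - x%:Z) * (q ^+ x * Bf x * iq (2 * x + 2)%N)) M.+1 L.+1); last 2 first.
  - by [].
  - by move=> x h1 h2; rewrite (@iq_neg (M%:Z - x%:Z)) ?mulr0 ?mul0r //; lia.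
  rewrite (@bailey_step (al 0) (fun x => q ^+ x * Bf x * iq (2 * x + 2)%N)); last first.
    by move=> n _; rewrite base_pair.
  apply: eq_bigr => r _; rewrite /al mul1n mul0n expr0; ring.
rewrite (sum_tuple_cons u.+1 L (fun s => Wv u.+2 s * iq (M%:Z - (bigN u.+2 s 0)%:Z))).
have -> : \sum_(x < L.+1) \sum_(t : u.+1.-tuple 'I_L.+1)
     Wv u.+2 (val x :: [seq val y | y <- t]) * iq (M%:Z - (bigN u.+2 (val x :: [seq val y | y <- t]) 0)%:Z)
   = \sum_(t : u.+1.-tuple 'I_L.+1) Wv u.+1 [seq val y | y <- t] *
       \sum_(n < M.+1) q ^+ (n * n + 2 * n) * iq (M%:Z - n%:Z) * iq (n%:Z - (bigN u.+1 [seq val y | y <- t] 0)%:Z).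
  rewrite exchange_big /=; apply: eq_bigr => t _.
  rewrite -(@inner_reindex L M (bigN u.+1 [seq val y | y <- t] 0) ML) mulr_sumr; apply: eq_bigr => x _.
  rewrite Wcons // bigN_cons0; ring.
have -> : \sum_(t : u.+1.-tuple 'I_L.+1) Wv u.+1 [seq val y | y <- t] *
       \sum_(n < M.+1) q ^+ (n * n + 2 * n) * iq (M%:Z - n%:Z) * iq (n%:Z - (bigN u.+1 [seq val y | y <- t] 0)%:Z)
   = \sum_(n < M.+1) q ^+ (n * n + 2 * n) * iq (M%:Z - n%:Z) *
       (fun n => \sum_(t : u.+1.-tuple 'I_L.+1) Wv u.+1 [seq val y | y <- t]
        * iq (n%:Z - (bigN u.+1 [seq val y | y <- t] 0)%:Z)) n.
  under eq_bigr => t _ do rewrite mulr_sumr.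
  rewrite exchange_big /=; apply: eq_bigr => n _; rewrite mulr_sumr; apply: eq_bigr => t _; ring.
rewrite (@bailey_step (al u.+1) (fun n => \sum_(t : u.+1.-tuple 'I_L.+1) Wv u.+1 [seq val y | y <- t]
        * iq (n%:Z - (bigN u.+1 [seq val y | y <- t] 0)%:Z))); last first.
  move=> n nM; rewrite IH //; exact: leq_trans nM ML.
apply: eq_bigr => r _; rewrite /al.
have -> : (u.+2 * (r * r + 2 * r) = (r * r + 2 * r) + u.+1 * (r * r + 2 * r))%N by lia.
rewrite [q ^+ (_ + u.+1 * _)]exprD; ring.
Qed.


Lemma sym_sum (h : int -> R) n :
  \sum_(i < (2 * n).+1) h (i%:Z - n%:Z) = h 0 + \sum_(r < n) (h r.+1%:Z + h (- r.+1%:Z)).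
Proof.
elim: n h => [|n IH] h.
  by rewrite big_ord_recl !big_ord0 addr0.
have -> : ((2 * n.+1).+1 = ((2 * n).+1).+2)%N by lia.
rewrite big_ord_recl big_ord_recr /=.
have -> : \sum_(i < (2 * n).+1) h ((bump 0 i)%:Z - n.+1%:Z) = \sum_(i < (2 * n).+1) h (i%:Z - n%:Z).
  by apply: eq_bigr => i _; congr h; rewrite /bump /=; lia.
rewrite IH big_ord_recr /=.
have -> : (0%N%:Z - n.+1%:Z) = - n.+1%:Z by lia.
have -> : ((bump 0 (2 * n).+1)%:Z - n.+1%:Z) = n.+1%:Z by rewrite /bump /=; lia.
ring.
Qed.

Lemma qbinomE (A : nat) (B : int) : qbinom q A B = qfac q A * iq B * iq (A%:Z - B).
Proof.
rewrite /qbinom; case: ifP => h.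
  move/andP: h => [h0 h1].
  case: B h0 h1 => // b _ h1.
  have -> : A%:Z - b%:Z = (A - b)%N by lia.
  by rewrite !iq_nat !absz_nat invfM mulrA.
case: (ltrP B 0) => hB.
  by rewrite (@iq_neg B) ?mulr0 ?mul0r.
move: h; rewrite hB /= => /negbT; rewrite -ltNge => hBA.
by rewrite (@iq_neg (A%:Z - B)) ?mulr0 //; lia.
Qed.

Lemma leg3N (r : nat) : @leg3 R (- r.+1%:Z) = - @leg3 R r.+1%:Z.
Proof.
rewrite -NegzE leg3_nat /leg3 modNz_nat //.
have [h|[h|h]] : (r %% 3 = 0 \/ r %% 3 = 1 \/ r %% 3 = 2)%N by lia.
- have h' : (r.+1 %% 3 = 1)%N by lia.
  by rewrite h h' /=.
- have h' : (r.+1 %% 3 = 2)%N by lia.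
  by rewrite h h' /= opprK.
- have h' : (r.+1 %% 3 = 0)%N by lia.
  by rewrite h h' /= oppr0.
Qed.

Lemma Ev_eq (v : nat) (j : int) :
  ((((2 * v + 1)%:Z * j ^+ 2 - 3 * j) %/ 2)%Z - (v%:Z - 1)) = E0 j + v%:Z * (j * j - 1).
Proof.
rewrite /E0.
have -> : (2 * v + 1)%:Z * j ^+ 2 - 3 * j = (v%:Z * (j * j)) * 2 + (j * j - 3 * j).
  rewrite expr2; ring.
rewrite divzMDl //; ring.
Qed.


Lemma main_sec (v L : nat) (hv : (1 <= v)%N) :
  (1 - q ^+ 3) / (1 - q) *
    \sum_(t : v.-tuple 'I_L.+1) lhs_term q v L [seq val x | x <- t]
  = \sum_(i < (2 * L).+1) rhs_term q v L (i%:Z - L%:Z).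
Proof.
case: v hv => [//|u] _.
under eq_bigr => t _ do rewrite lhs_W.
rewrite sym_sum.
have -> : rhs_term q u.+1 L 0 = 0 by rewrite /rhs_term (leg3_nat 0) /= !mul0r.
rewrite add0r.
case: L => [|L].
  rewrite big_ord0 big1 ?mulr0 // => t _.
  rewrite iq_neg ?mulr0 //; lia.
have -> : \sum_(t : u.+1.-tuple 'I_L.+2) Wv u.+1 [seq val x | x <- t] * qfac q (2 * L.+1)
     * iq (L.+1%:Z - 1 - (bigN u.+1 [seq val x | x <- t] 0)%:Z)
   = qfac q (2 * L.+1) * \sum_(t : u.+1.-tuple 'I_L.+2) Wv u.+1 [seq val x | x <- t]
     * iq (L%:Z - (bigN u.+1 [seq val x | x <- t] 0)%:Z).
  rewrite mulr_sumr; apply: eq_bigr => t _.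
  have -> : L.+1%:Z - 1 - (bigN u.+1 [seq val x | x <- t] 0)%:Z = L%:Z - (bigN u.+1 [seq val x | x <- t] 0)%:Z by lia.
  ring.
rewrite chain // !mulr_sumr; apply: eq_bigr => r _.
rewrite /rhs_term !qbinomE !Ev_eq leg3N E0_neg mulrNN.
have i1 : iq (L.+1%:Z + r.+1%:Z) = iq (L + r + 2)%N by congr iq; lia.
have i2 : iq ((2 * L.+1)%N%:Z - (L.+1%:Z + r.+1%:Z)) = iq (L%:Z - r%:Z) by congr iq; lia.
have i3 : iq (L.+1%:Z + - r.+1%:Z) = iq (L%:Z - r%:Z) by congr iq; lia.
have i4 : iq ((2 * L.+1)%N%:Z - (L.+1%:Z + - r.+1%:Z)) = iq (L + r + 2)%N by congr iq; lia.
rewrite i1 i2 i3 i4.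
have ev : u.+1%:Z * (r.+1%:Z * r.+1%:Z - 1) = (u.+1 * (r * r + 2 * r))%N.
  rewrite !(PoszM, PoszD) !intS; ring.
rewrite ev (qzD (E0 r.+1%:Z + 3 * r.+1%:Z)) (qzD (E0 r.+1%:Z) (3 * r.+1%:Z)) (qzD (E0 r.+1%:Z)) /al.
have -> : q ^ (3 * r.+1%:Z) = q ^+ (3 * r.+1) by rewrite -PoszM.
have h3 := q3n0; have h1 := q1n0'.
have -> : q ^ (u.+1 * (r * r + 2 * r))%N%:Z = q ^+ (u.+1 * (r * r + 2 * r)) by [].
field.
by rewrite h3 h1.
Qed.

End Main.

Theorem mainTheorem7 (R : numFieldType) (q : R)
    (hq0 : q != 0) (hq : forall k : nat, (0 < k)%N -> q ^+ k != 1)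
    (v L : nat) (hv : (1 <= v)%N) :
  (1 - q ^+ 3) / (1 - q) *
    \sum_(t : v.-tuple 'I_L.+1) lhs_term q v L [seq val x | x <- t]
  = \sum_(i < (2 * L).+1) rhs_term q v L (i%:Z - L%:Z).
Proof. exact: (@main_sec R q hq0 hq v L hv). Qed.
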